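(* For every positive integer $n$, $\mathcal M(n)\le\mathcal M(n+1)$.
   Context: An edge-magic labelling of a graph $G$ with $n$ vertices and $m$ edges is a bijection $l:V(G)\cup E(G)\to\{1,\dots,m+n\}$ such that $l(a)+l(b)+l(ab)$ is the same for all edges $ab$; $G$ is edge-magic if it admits one. $\mathcal M(n)$ denotes the maximum number of edges of an edge-magic graph with $n$ vertices. *)

(* Defs.v *)
From mathcomp Require Import all_boot all_order.
Set Implicit Arguments. Unset Strict Implicit. Unset Printing Implicit Defensive.

(* A simple graph on the vertex set 'I_n is given by its edge set
   E : {set {set 'I_n}}, every edge being a 2-element subset {a,b}. *)
Definition simple_edges (n : nat) (E : {set {set 'I_n}}) : bool :=
  [forall e in E, #|e| == 2].

(* Domain V(G) u E(G) of a labelling, seen inside 'I_n + {set 'I_n}. *)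
Definition lab_dom (n : nat) (E : {set {set 'I_n}}) (x : 'I_n + {set 'I_n}) : bool :=
  match x with inl _ => true | inr e => e \in E end.

(* lab is an edge-magic labelling of G = ('I_n, E):
   a bijection from V(G) u E(G) onto {1, ..., m + n} (m = #|E|) such that
   lab a + lab b + lab ab is the same for all edges ab. *)
Definition edge_magic_lab (n : nat) (E : {set {set 'I_n}})
    (lab : 'I_n + {set 'I_n} -> nat) : bool :=
  let m := #|E| in
  [&& [forall x, forall y,
        [&& lab_dom E x, lab_dom E y & lab x == lab y] ==> (x == y)],
      [forall x, lab_dom E x ==> (1 <= lab x <= m + n)],
      [forall k : 'I_(m + n).+1, (0 < k) ==> [exists x, lab_dom E x && (lab x == k)]] &
      [forall a, forall b, forall c, forall d,
        [&& a != b, [set a; b] \in E, c != d & [set c; d] \in E] ==>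
        (lab (inl a) + lab (inl b) + lab (inr [set a; b])
         == lab (inl c) + lab (inl d) + lab (inr [set c; d]))]].

(* G admits an edge-magic labelling (values of a bijection onto {1..m+n}
   are bounded by m+n, so we may search among functions into 'I_(m+n).+1). *)
Definition edge_magic (n : nat) (E : {set {set 'I_n}}) : bool :=
  [exists lab : {ffun 'I_n + {set 'I_n} -> 'I_(#|E| + n).+1},
     edge_magic_lab E (fun x => nat_of_ord (lab x))].

Definition M (n : nat) : nat :=
  \max_(E : {set {set 'I_n}} | simple_edges E && edge_magic E) #|E|.

(* Main.v *)
Require Import Defs.
From mathcomp Require Import all_boot all_order.

Section Aux.
Variable n : nat.
Local Notation L := (lift (@ord_max n)).

Lemma L_inj : injective L. Proof. exact: lift_inj. Qed.

Lemma preimL (e : {set 'I_n}) : L @^-1: (L @: e) = e.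
Proof. by apply/setP => x; rewrite inE mem_imset //; exact: L_inj. Qed.

Lemma lab_ext (m : nat) (E : {set {set 'I_m}}) (l1 l2 : 'I_m + {set 'I_m} -> nat) :
  (forall x, lab_dom E x -> l1 x = l2 x) -> edge_magic_lab E l1 -> edge_magic_lab E l2.
Proof.
move=> H /and4P[/forallP H1 /forallP H2 /forallP H3 /forallP H4].
apply/and4P; split.
- apply/forallP => x; apply/forallP => y; apply/implyP => /and3P[dx dy /eqP e].
  move: (H1 x) => /forallP /(_ y) /implyP; apply.
  by rewrite dx dy H // H // e eqxx.
- apply/forallP => x; apply/implyP => dx.
  by move: (H2 x) => /implyP /(_ dx); rewrite H.
- apply/forallP => k; apply/implyP => k0.
  move: (H3 k) => /implyP /(_ k0) /existsP [x /andP[dx e]].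
  by apply/existsP; exists x; rewrite dx -H.
- apply/forallP => a; apply/forallP => b; apply/forallP => c; apply/forallP => d.
  apply/implyP => /and4P[ab abE cd cdE].
  move: (H4 a) => /forallP /(_ b) /forallP /(_ c) /forallP /(_ d) /implyP.
  by rewrite ab abE cd cdE !H //; apply.
Qed.

Lemma em_of_lab (m : nat) (E : {set {set 'I_m}}) (l : 'I_m + {set 'I_m} -> nat) :
  edge_magic_lab E l -> edge_magic E.
Proof.
move=> H; apply/existsP.
exists [ffun x => (inord (l x) : 'I_(#|E| + m).+1)].
have H' := H.
apply: lab_ext H => x dx; rewrite ffunE inordK //.
move: H' => /and4P[_ /forallP /(_ x) /implyP /(_ dx) /andP[_ h] _ _].
by rewrite ltnS.
Qed.

End Aux.

Theorem lemma2 (n : nat) : 0 < n -> M n <= M n.+1.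
Proof.
move=> _; rewrite /M; apply/bigmax_leqP => E /andP[sE /existsP[lab Hl]].
pose L : 'I_n -> 'I_n.+1 := lift ord_max.
pose E' := [set L @: e | e : {set 'I_n} in E].
have cE : #|E'| = #|E| by rewrite card_imset //; apply: imset_inj; exact: L_inj.
rewrite -cE; apply: (leq_bigmax_cond (P := fun E0 : {set {set 'I_n.+1}} => simple_edges E0 && edge_magic E0) (F := fun E0 => #|E0|) E').
apply/andP; split.
  apply/forallP => e; apply/implyP => /imsetP[e0 e0E ->].
  rewrite card_imset; last exact: L_inj.
  by move: sE => /forallP /(_ e0) /implyP; apply.
set l := fun x : 'I_n + {set 'I_n} => nat_of_ord (lab x).
pose l' := fun x : 'I_n.+1 + {set 'I_n.+1} => match x with
  | inl v => match unlift ord_max v with Some i => l (inl i) | None => (#|E| + n).+1 end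
  | inr e => l (inr (L @^-1: e)) end.
apply: (@em_of_lab _ _ l').
move: Hl => /and4P[/forallP H1 /forallP H2 /forallP H3 /forallP H4].
have inj x y : lab_dom E x -> lab_dom E y -> l x = l y -> x = y.
  move=> dx dy e; move: (H1 x) => /forallP /(_ y) /implyP H.
  by apply/eqP; apply: H; rewrite dx dy; apply/eqP.
have bd x : lab_dom E x -> 0 < l x <= #|E| + n.
  by move=> dx; move: (H2 x) => /implyP; apply.
have lL i : l' (inl (L i)) = l (inl i) by rewrite /l' /L liftK.
have lLe (e0 : {set 'I_n}) : l' (inr (L @: e0)) = l (inr e0) by rewrite /l' preimL.
have memE' (e : {set 'I_n.+1}) : e \in E' -> exists2 e0, e0 \in E & e = L @: e0.
  by move=> /imsetP[e0 h ->]; exists e0.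
have vcase (v : 'I_n.+1) : v = ord_max \/ exists i, v = L i.
  by case: (unliftP ord_max v) => [i ->|->]; [right; exists i | left].
apply/and4P; split.
- apply/forallP => x; apply/forallP => y; apply/implyP => /and3P[dx dy /eqP e].
  apply/eqP; case: x dx e => [v|ex] dx; case: y dy => [w|ey] dy.
  + case: (vcase v) => [->|[i ->]]; case: (vcase w) => [->|[j ->]] //.
    * rewrite lL /l' unlift_none => /esym h.
      by move: (bd (inl j) isT); rewrite h ltnn andbF.
    * rewrite lL /l' unlift_none => h.
      by move: (bd (inl i) isT); rewrite h ltnn andbF.
    * by rewrite !lL => /(inj (inl i) (inl j) isT isT) [->].
  + have [e0 e0E ->] := memE' _ dy; rewrite lLe.
    case: (vcase v) => [->|[i ->]].
    * rewrite /l' unlift_none => h.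
      by move: (bd (inr e0) e0E); rewrite -h ltnn andbF.
    * by rewrite lL => /(inj (inl i) (inr e0) isT e0E).
  + have [e0 e0E ->] := memE' _ dx; rewrite lLe.
    case: (vcase w) => [->|[i ->]].
    * rewrite /l' unlift_none => h.
      by move: (bd (inr e0) e0E); rewrite h ltnn andbF.
    * by rewrite lL => /(inj (inr e0) (inl i) e0E isT).
  + have [e0 e0E ->] := memE' _ dx; have [e1 e1E ->] := memE' _ dy.
    by rewrite !lLe => /(inj (inr e0) (inr e1) e0E e1E) [->].
- apply/forallP => x; apply/implyP; rewrite cE.
  case: x => [v|ex] dx.
  + case: (vcase v) => [->|[i ->]].
      by rewrite /l' unlift_none addnS leqnn.
    by rewrite lL; move: (bd (inl i) isT) => /andP[-> h] /=; rewrite addnS leqW.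
  + have [e0 e0E ->] := memE' _ dx; rewrite lLe.
    by move: (bd (inr e0) e0E) => /andP[-> h] /=; rewrite addnS leqW.
- apply/forallP => k; apply/implyP => k0.
  have : (k < (#|E| + n.+1).+1)%N by rewrite -cE ltn_ord.
  rewrite ltnS leq_eqVlt => /orP[/eqP kE|klt].
    by apply/existsP; exists (inl (@ord_max n)); rewrite /= unlift_none kE addnS.
  have kk : (k < (#|E| + n).+1)%N by apply: (leq_trans klt); rewrite addnS.
  move: (H3 (Ordinal kk)) => /implyP /(_ k0) /existsP [[i|e0] /andP[dx /eqP e]].
    by apply/existsP; exists (inl (L i)); rewrite lL /l e /=.
  apply/existsP; exists (inr (L @: e0)); rewrite lLe /l e /= eqxx andbT.
  by apply/imsetP; exists e0.
- apply/forallP => a; apply/forallP => b; apply/forallP => c; apply/forallP => d.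
  apply/implyP => /and4P[ab abE cd cdE].
  have key (x y : 'I_n.+1) : x != y -> [set x; y] \in E' -> exists x0 y0,
      [/\ x = L x0, y = L y0, [set x0; y0] \in E, x0 != y0
        & [set x; y] = L @: [set x0; y0]].
    move=> xy /memE' [e0 e0E he].
    have : x \in L @: e0 by rewrite -he !inE eqxx.
    move=> /imsetP [x0 _ hx].
    have : y \in L @: e0 by rewrite -he !inE eqxx orbT.
    move=> /imsetP [y0 _ hy].
    have hs : [set x; y] = L @: [set x0; y0] by rewrite imsetU1 imset_set1 hx hy.
    exists x0, y0; split => //.
    + have : L @: [set x0; y0] = L @: e0 by rewrite -hs.
      by move/(imset_inj (@L_inj n)) => ->.
    + by apply: contra xy; rewrite hx hy => /eqP ->.
  have [a0 [b0 [-> -> h1 h2 ->]]] := key _ _ ab abE.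
  have [c0 [d0 [-> -> h3 h4 ->]]] := key _ _ cd cdE.
  rewrite !lL !lLe.
  move: (H4 a0) => /forallP /(_ b0) /forallP /(_ c0) /forallP /(_ d0) /implyP.
  by rewrite h1 h2 h3 h4; apply.
Qed.
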